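(* Let $r\ge 2$ and $k\ge 2$, let $H=(V,\mathcal{E})$ be an $r$-uniform hypergraph and let $c$ be a Nash equilibrium $k$-coloring of $H$ for the game with CF players. Let $j(e)=|\{v\in e: c(e\setminus\{v\})=c(e)\}|$ for $e\in\mathcal{E}$ and $\hat j=\sum_{e\in\mathcal{E}}j(e)$. Then (1) $\hat j\le \dfrac{|\mathcal{E}|\,r(r-1)}{\frac r2+k-1}$; (2) $SW(c)\ge |\mathcal{E}|\,r\,\dfrac{2k-r}{2k+r-2}$.
   Context: A hypergraph $H=(V,\mathcal{E})$ consists of a finite set $V$ of vertices and a finite set $\mathcal{E}$ of nonempty subsets of $V$; it is $r$-uniform if $|e|=r$ for all $e\in\mathcal{E}$. A $k$-coloring is a map $c:V\to[k]$; for $S\subseteq V$, $c(S)$ is the set of colors of vertices of $S$. $\mathcal{E}(v)=\{e\in\mathcal{E}: v\in e\}$. With CF (conflict-free seeking) players, $u_v(c)=|\{e\in\mathcal{E}(v): |c(e)|=|c(e\setminus\{v\})|+1\}|$, and $SW(c)=\sum_{v\in V}u_v(c)$. A coloring $c$ is a Nash equilibrium if $u_v(c)\ge u_v(c_{-v},i)$ for all $v\in V$, $i\in[k]$, where $(c_{-v},i)$ is $c$ with the color of $v$ replaced by $i$. *)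

(* Defs.v *)
From HB Require Import structures.
From mathcomp Require Import all_boot all_order all_algebra.
Set Implicit Arguments. Unset Strict Implicit. Unset Printing Implicit Defensive.
Import Order.TTheory GRing.Theory Num.Theory.

Definition hypergraph (V : finType) (E : {set {set V}}) : Prop :=
  forall e, e \in E -> e != set0.

Definition uniform (V : finType) (r : nat) (E : {set {set V}}) : Prop :=
  forall e, e \in E -> #|e| = r.

(* k-colorings: maps V -> 'I_k; c(S) is the image set c @: S. *)

Definition util_CF (V : finType) (k : nat) (E : {set {set V}})
  (c : V -> 'I_k) (v : V) : nat :=
  #|[set e in E | (v \in e) && (#|c @: e| == #|c @: (e :\ v)|.+1)]|.

Definition recolor (V : finType) (k : nat) (c : V -> 'I_k) (v : V) (i : 'I_k)
  : V -> 'I_k := fun x => if x == v then i else c x.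

Definition social_welfare (V : finType) (k : nat) (E : {set {set V}})
  (c : V -> 'I_k) : nat := \sum_(v : V) util_CF E c v.

Definition nash_eq (V : finType) (k : nat) (E : {set {set V}})
  (c : V -> 'I_k) : Prop :=
  forall (v : V) (i : 'I_k), util_CF E (recolor c v i) v <= util_CF E c v.

Definition jcount (V : finType) (k : nat) (c : V -> 'I_k) (e : {set V}) : nat :=
  #|[set v in e | c @: (e :\ v) == c @: e]|.

Definition jhat (V : finType) (k : nat) (E : {set {set V}}) (c : V -> 'I_k) : nat :=
  \sum_(e in E) jcount c e.

(* Main.v *)
Require Import Defs.
From HB Require Import structures.
From mathcomp Require Import all_boot all_order all_algebra.
From mathcomp Require Import zify ring lra.
Local Open Scope nat_scope.
Import Order.TTheory GRing.Theory Num.Theory.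
Set Implicit Arguments. Unset Strict Implicit.

Lemma card_sep (T : finType) (A : {set T}) (P : pred T) :
  #|[set x in A | P x]| = \sum_(x in A) (P x : nat).
Proof.
rewrite -sum1_card [LHS]big_mkcond [RHS]big_mkcond /=.
by apply: eq_bigr => x _; rewrite !inE; case: (x \in A); case: (P x).
Qed.

Definition uq (V : finType) (k : nat) (c : V -> 'I_k) (e : {set V}) (v : V) : bool :=
  c v \notin c @: (e :\ v).

Lemma imset_del (V : finType) (k : nat) (c : V -> 'I_k) (e : {set V}) (v : V) :
  v \in e -> c @: e = c v |: c @: (e :\ v).
Proof. by move=> ve; rewrite -{1}(setD1K ve) imsetU1. Qed.

Lemma card_del (V : finType) (k : nat) (c : V -> 'I_k) (e : {set V}) (v : V) :
  v \in e -> #|c @: e| = uq c e v + #|c @: (e :\ v)|.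
Proof. by move=> ve; rewrite (imset_del c ve) cardsU1. Qed.

Lemma util_formula (V : finType) (k : nat) (E : {set {set V}}) (c : V -> 'I_k) v :
  util_CF E c v = \sum_(e in E | v \in e) (uq c e v : nat).
Proof.
rewrite /util_CF card_sep big_mkcondr /=.
apply: eq_bigr => e _; case ve: (v \in e) => //=.
rewrite (card_del c ve); case: (uq c e v) => /=.
  by rewrite add1n eqxx.
by rewrite add0n; case: eqP => // h; lia.
Qed.

Lemma util_recolor (V : finType) (k : nat) (E : {set {set V}}) (c : V -> 'I_k) v i :
  util_CF E (recolor c v i) v = \sum_(e in E | v \in e) (i \notin c @: (e :\ v) : nat).
Proof.
rewrite util_formula; apply: eq_bigr => e _; rewrite /uq /recolor eqxx.
rewrite (@eq_in_imset _ _ _ c) // => x; rewrite !inE => /andP[/negbTE -> _].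
by [].

Qed.

Lemma exch (V : finType) (E : {set {set V}}) (F : {set V} -> V -> nat) :
  \sum_(v : V) \sum_(e in E | v \in e) F e v = \sum_(e in E) \sum_(v in e) F e v.
Proof.
under eq_bigr do rewrite big_mkcond.
rewrite exchange_big [RHS]big_mkcond; apply: eq_bigr => e _ /=.
case eE: (e \in E) => /=; last by rewrite big1.
by rewrite [RHS]big_mkcond.
Qed.

Lemma nash_sum (V : finType) (k : nat) (E : {set {set V}}) (c : V -> 'I_k) v :
  nash_eq E c ->
  \sum_(e in E | v \in e) #|~: (c @: (e :\ v))| <= k * util_CF E c v.
Proof.
move=> N.
have -> : \sum_(e in E | v \in e) #|~: (c @: (e :\ v))| =
          \sum_(i : 'I_k) util_CF E (recolor c v i) v.
  under [RHS]eq_bigr do rewrite util_recolor.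
  rewrite exchange_big; apply: eq_bigr => e _.
  rewrite -sum1_card [LHS]big_mkcond /=; apply: eq_bigr => i _.
  by rewrite inE; case: (_ \notin _).
rewrite -[k in k * _]card_ord -sum_nat_const.
by apply: leq_sum => i _; apply: N.
Qed.

Section Edge.
Variables (V : finType) (k : nat) (c : V -> 'I_k) (e : {set V}).

Lemma jcount_formula : jcount c e = \sum_(v in e) (~~ uq c e v : nat).
Proof.
rewrite /jcount card_sep; apply: eq_bigr => v ve.
rewrite (imset_del c ve) /uq negbK; congr (nat_of_bool _).
apply/eqP/idP => [h | h].
  by rewrite h; apply: setU11.
by apply/setP => x; rewrite !inE; case: eqP => // ->.
Qed.

Lemma edge_a : \sum_(v in e) (uq c e v : nat) + jcount c e = #|e|.
Proof.
rewrite jcount_formula -big_split /= -sum1_card; apply: eq_bigr => v _.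
by rewrite addnC addn_negb.
Qed.

Lemma edge_b : \sum_(v in e) #|~: (c @: (e :\ v))| + \sum_(v in e) #|c @: (e :\ v)| = #|e| * k.
Proof.
rewrite -big_split /= -sum_nat_const; apply: eq_bigr => v _.
by rewrite addnC cardsC card_ord.
Qed.

Lemma edge_c : \sum_(v in e) #|c @: (e :\ v)| + \sum_(v in e) (uq c e v : nat) = #|e| * #|c @: e|.
Proof.
rewrite -big_split /= -sum_nat_const; apply: eq_bigr => v ve.
by rewrite (card_del c ve) addnC.
Qed.

Lemma edge_d : 2 * #|c @: e| + jcount c e <= 2 * #|e|.
Proof.
set U := [set v in e | uq c e v].
set N := [set v in e | ~~ uq c e v].
have cU : #|U| = \sum_(v in e) (uq c e v : nat) by rewrite card_sep.
have cN : #|N| = jcount c e by rewrite card_sep jcount_formula.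
have eUN : e = U :|: N.
  by apply/setP => x; rewrite !inE; case: (x \in e); case: (uq c e x).
have h1 : #|c @: e| <= #|U| + #|c @: N|.
  rewrite {1}eUN imsetU; apply: leq_trans (leq_card_setU _ _) _.
  by rewrite leq_add2r leq_imset_card.
have h2 : 2 * #|c @: N| <= #|N|.
  rewrite -[#|N|]sum1_card (partition_big c (fun col => col \in c @: N)); last first.
    by move=> v vN; apply: imset_f.
  rewrite mulnC -sum_nat_const; apply: leq_sum => col /imsetP[v vN ->].
  move: (vN); rewrite inE => /andP[ve]; rewrite /uq negbK => /imsetP[w].
  rewrite !inE => /andP[wv we] cvw.
  have wN : w \in N.
    rewrite !inE we /uq negbK /=; apply/imsetP; exists v => //.
    by rewrite !inE ve andbT eq_sym.
  rewrite sum1dep_card.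
  have -> : 2 = #|[set v; w]| by rewrite cards2 eq_sym wv.
  apply: subset_leq_card; apply/subsetP => x; rewrite !inE.
  by case/orP => /eqP ->; rewrite ?cvw eqxx andbT; [move: vN | move: wN]; rewrite inE => ->.
have := edge_a; rewrite -cU -cN; lia.
Qed.
End Edge.

Lemma nat_main (V : finType) (r k : nat) (E : {set {set V}}) (c : V -> 'I_k) :
  (2 <= r)%N -> uniform r E -> nash_eq E c ->
  (social_welfare E c + jhat E c = #|E| * r)%N /\
  (2 * k * jhat E c + r * jhat E c + 2 * r * #|E| <= 2 * r * r * #|E| + 2 * jhat E c)%N.
Proof.
move=> r2 U N.
set S := \sum_(e in E) \sum_(v in e) #|~: (c @: (e :\ v))|.
have hS : S <= k * social_welfare E c.
  rewrite /S -exch /social_welfare big_distrr /=; apply: leq_sum => v _.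
  exact: nash_sum.
have hSW : social_welfare E c + jhat E c = #|E| * r.
  rewrite /social_welfare (eq_bigr _ (fun v _ => util_formula E c v)) exch.
  rewrite /jhat -big_split /= -sum_nat_const; apply: eq_bigr => e eE.
  by rewrite edge_a U.
split => //.
have hE : \sum_(e in E) (2 * (\sum_(v in e) #|~: (c @: (e :\ v))|) + 2 * r * r + 2 * jcount c e)
        >= \sum_(e in E) (2 * r * k + 2 * r + r * jcount c e).
  apply: leq_sum => e eE.
  have := edge_a c e; have := edge_b c e; have := edge_c c e; have := edge_d c e.
  rewrite U //.
  set A := \sum_(v in e) #|~: _|.
  set B := \sum_(v in e) #|_|.
  set Q := \sum_(v in e) _.
  set C := #|_|; set j := jcount c e => hd hc hb ha.
  have hm : r * (2 * C + j) <= r * (2 * r) by rewrite leq_mul2l hd orbT.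
  nia.
rewrite !big_split /= -!big_distrr /= !sum_nat_const -/S -/(jhat E c) in hE.
have hk : k * social_welfare E c + k * jhat E c = k * (#|E| * r) by rewrite -mulnDr hSW.
clearbody S; move: hS hSW hE hk; set a := social_welfare E c; set b := jhat E c; set n := #|E|; clearbody a b n => *; nia.
Qed.
Unset Implicit Arguments.
Local Open Scope ring_scope.

Theorem mainTheorem6 (V : finType) (r k : nat) (E : {set {set V}})
  (c : V -> 'I_k) :
  (2 <= r)%N -> (2 <= k)%N ->
  hypergraph E -> uniform r E -> nash_eq E c ->
  ((jhat E c)%:R : rat) <=
    (#|E| * r * (r - 1))%:R / ((r%:R : rat) / 2%:R + k%:R - 1)
  /\
  ((social_welfare E c)%:R : rat) >=
    (#|E| * r)%:R * ((2 * k)%:R - r%:R) / ((2 * k + r - 2)%N%:R).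
Proof.
move=> r2 k2 _ U N.
have [h1 h2] := nat_main r2 U N.
move: h1 h2; set a := social_welfare E c; set b := jhat E c; set n := #|E| => h1 h2.
have R1 : (a%:R + b%:R = n%:R * r%:R :> rat) by rewrite -natrD -natrM h1.
have R2 : (2 * k%:R * b%:R + r%:R * b%:R + 2 * r%:R * n%:R
           <= 2 * r%:R * r%:R * n%:R + 2 * b%:R :> rat).
  have := h2; rewrite -(ler_nat rat) !natrD !natrM => H; lra.
have rr : (2%:R <= r%:R :> rat) by rewrite ler_nat.
have kk : (2%:R <= k%:R :> rat) by rewrite ler_nat.
have b0 : (0 <= b%:R :> rat) by [].
have n0 : (0 <= n%:R :> rat) by [].
split.
  rewrite ler_pdivlMr; last by lra.
  rewrite natrM natrB ?(leq_trans _ r2) // natrM. nra.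
rewrite natrB; last by lia.
rewrite ler_pdivrMr; last first.
  rewrite natrD natrM; lra.
rewrite !natrD !natrM; nra.
Qed.
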